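(* Let $\tau$ be a trace on $\widehat{TL}_3(q)$, let $X=g_{\sigma_2}g_{\sigma_1}g_{a_3}$, $u=g_{\sigma_2}g_{a_3}g_{\sigma_2}^{-1}$, and let $r\le s$ be positive integers. Then there exist an integer $0\le h\le s$, elements $c_0,\dots,c_h\in B$ and finitely many Markov elements $M_i$ such that $$\tau\Big(g_{a_3}\,u\,(g_{\sigma_1}u)^{s}\,g_{a_3}\,(g_{\sigma_1}u)^{r}\Big)=\tau\Big(\sum_{j=0}^{h}c_jX^{j}+\sum_iM_i\Big).$$
   Context: $K$ is an integral domain of characteristic $0$, $q\in K$ invertible and a square, $q+1$ invertible. $\widehat{TL}_3(q)$ is the unital $K$-algebra generated by $g_{\sigma_1},g_{\sigma_2},g_{a_3}$ with relations $g_{\sigma_1}g_{\sigma_2}g_{\sigma_1}=g_{\sigma_2}g_{\sigma_1}g_{\sigma_2}$, $g_{\sigma_i}g_{a_3}g_{\sigma_i}=g_{a_3}g_{\sigma_i}g_{a_3}$ ($i=1,2$), $x^2=(q-1)x+q$ for each generator $x$, and $V(g_{\sigma_1},g_{\sigma_2})=V(g_{\sigma_1},g_{a_3})=V(g_{\sigma_2},g_{a_3})=0$ where $V(x,y)=xyx+xy+yx+x+y+1$. $B$ is the unital subalgebra generated by $g_{\sigma_1}$ and $u$. A Markov element is an element $A\,g_{\sigma_2}^{\epsilon}A'$ with $A,A'\in B$, $\epsilon\in\{0,1\}$. A trace is a $K$-linear map $\tau:\widehat{TL}_3(q)\to K$ with $\tau(xy)=\tau(yx)$. *)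

(* Defs.v *)
From HB Require Import structures.
From mathcomp Require Import all_boot all_order all_algebra.
Set Implicit Arguments. Unset Strict Implicit. Unset Printing Implicit Defensive.
Import GRing.Theory.
Local Open Scope ring_scope.

Section TL.
Variables (K : idomainType) (A : algType K) (q : K).

Definition Vrel (x y : A) : A := x * y * x + x * y + y * x + x + y + 1.

(* inverse of a generator x satisfying x^2 = (q-1)x + q :
   x^{-1} = q^{-1} (x - (q-1)) *)
Definition ginv (x : A) : A := q^-1 *: (x - (q - 1)%:A).

Inductive in_subalg2 (a b : A) : A -> Prop :=
  | sub_one : in_subalg2 a b 1
  | sub_a : in_subalg2 a b a
  | sub_b : in_subalg2 a b b
  | sub_add x y : in_subalg2 a b x -> in_subalg2 a b y -> in_subalg2 a b (x + y)
  | sub_scale (c : K) x : in_subalg2 a b x -> in_subalg2 a b (c *: x)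
  | sub_mul x y : in_subalg2 a b x -> in_subalg2 a b y -> in_subalg2 a b (x * y).

Definition markov (a b g : A) (m : A) : Prop :=
  exists x y (eps : bool), in_subalg2 a b x /\ in_subalg2 a b y /\
    m = x * g ^+ eps * y.

(* the defining relations of hat-TL_3(q) on g1 = g_{sigma_1}, g2 = g_{sigma_2}, g3 = g_{a_3} *)
Definition TL3_rels (g1 g2 g3 : A) : Prop :=
  [/\ g1 * g2 * g1 = g2 * g1 * g2,
      g1 * g3 * g1 = g3 * g1 * g3,
      g2 * g3 * g2 = g3 * g2 * g3,
      (forall x, x \in [:: g1; g2; g3] -> x ^+ 2 = (q - 1) *: x + q%:A)
    & [/\ Vrel g1 g2 = 0, Vrel g1 g3 = 0 & Vrel g2 g3 = 0]].

Definition is_trace (tau : A -> K) : Prop :=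
  (forall (c : K) x y, tau (c *: x + y) = c * tau x + tau y) /\
  (forall x y, tau (x * y) = tau (y * x)).

End TL.

(* Main.v *)
Require Import Defs.
From HB Require Import structures.
From mathcomp Require Import all_boot all_order all_algebra.
From mathcomp Require Import ring zify.
Import GRing.Theory.
Local Open Scope ring_scope.
Set Implicit Arguments. Unset Strict Implicit. Unset Printing Implicit Defensive.

Section Lin.
Variables (K : idomainType) (A : algType K).
Definition psi (l : seq A) (p : {poly K}) : A := \sum_(i < size l) p`_i *: l`_i.
Lemma psiD l u v : psi l u + psi l v = psi l (u + v).
Proof. by rewrite /psi -big_split; apply: eq_bigr => i _; rewrite coefD scalerDl. Qed.
Lemma psiN l u : - psi l u = psi l (- u).
Proof. by rewrite /psi -sumrN; apply: eq_bigr => i _; rewrite coefN scaleNr. Qed.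
Lemma psiB l u v : psi l u - psi l v = psi l (u - v).
Proof. by rewrite psiN psiD. Qed.
Lemma psiZ l k u : k *: psi l u = psi l (k%:P * u).
Proof. by rewrite /psi scaler_sumr; apply: eq_bigr => i _; rewrite coefCM scalerA. Qed.
Lemma psi0 l : 0 = psi l 0.
Proof. by rewrite /psi big1 // => i _; rewrite coef0 scale0r. Qed.
Lemma psiX l i : (i < size l)%N -> psi l 'X^i = l`_i.
Proof.
move=> hi; rewrite /psi (bigD1 (Ordinal hi)) //= coefXn eqxx scale1r big1 ?addr0 //.
move=> j hj; rewrite coefXn; case: eqP => [h|]; last by rewrite scale0r.
by case/eqP: hj; apply: val_inj.
Qed.
End Lin.

Ltac lin_atoms L l i :=
  match l with
  | [::] => idtac
  | ?a :: ?l' =>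
      first [ rewrite (_ : a = psi L 'X^i); [ | by rewrite psiX ] | idtac ];
      lin_atoms L l' (S i)
  end.
Ltac lin atoms :=
  let L := fresh "L" in pose L := atoms;
  lin_atoms L atoms 0%N;
  rewrite ?(psiD, psiN, psiB, psiZ);
  rewrite ?[0](psi0 L);
  congr (psi L _).

Lemma kq (K : idomainType) (a b : K) : tofrac a = tofrac b -> a = b.
Proof. by move=> h; apply/eqP; rewrite -tofrac_eq h. Qed.

Section Basic.
Variables (K : idomainType) (q : K) (A : algType K).

Lemma TLsq (x : A) : x ^+ 2 = (q - 1) *: x + q%:A -> (x + 1) * (x + 1) = (q + 1) *: (x + 1).
Proof. move=> hx. rewrite mulrDl mulrDr mul1r mulr1 -expr2 hx. lin [:: x; (1:A)]. ring. Qed.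

Lemma Vsym (x y : A) : x * y * x = y * x * y -> Vrel x y = 0 -> Vrel y x = 0.
Proof. move=> hb hv; rewrite -hv /Vrel hb. lin [:: y * x * y; x * y; y * x; x; y; (1:A)]. ring. Qed.

Lemma TLtri (x y : A) : x ^+ 2 = (q - 1) *: x + q%:A -> Vrel x y = 0 ->
  (x + 1) * (y + 1) * (x + 1) = q *: (x + 1).
Proof.
move=> hx hv.
have e : x * y * x = - (x * y + y * x + x + y + 1).
  by apply/eqP; rewrite -addr_eq0; apply/eqP; rewrite -hv /Vrel; lin [:: x * y * x; x * y; y * x; x; y; (1:A)]; ring.
rewrite !(mulrDl, mulrDr, mul1r, mulr1) -expr2 e hx.
lin [:: x * y; y * x; x; y; (1:A)]. ring.
Qed.
End Basic.

Section Main.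
Variables (K : idomainType) (q : K) (A : algType K) (g1 g2 g3 : A).
Hypothesis qU : q \is a GRing.unit.
Hypothesis rels : TL3_rels q g1 g2 g3.
Hypothesis q1U : (q + 1) \is a GRing.unit.
Variable tau : A -> K.
Hypothesis tau_tr : is_trace tau.

Lemma hqK : (q^-1)%:P * q%:P = 1 :> {poly K}.
Proof. by rewrite -polyCM mulVr. Qed.
Lemma hqk : q^-1 * q = 1. Proof. by rewrite mulVr. Qed.

Lemma sq1 : g1 ^+ 2 = (q - 1) *: g1 + q%:A.
Proof. by case: rels => _ _ _ h _; apply: h; rewrite !inE eqxx. Qed.
Lemma sq2 : g2 ^+ 2 = (q - 1) *: g2 + q%:A.
Proof. by case: rels => _ _ _ h _; apply: h; rewrite !inE eqxx ?orbT. Qed.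
Lemma sq3 : g3 ^+ 2 = (q - 1) *: g3 + q%:A.
Proof. by case: rels => _ _ _ h _; apply: h; rewrite !inE eqxx ?orbT. Qed.
Lemma br12 : g1 * g2 * g1 = g2 * g1 * g2. Proof. by case: rels. Qed.
Lemma br13 : g1 * g3 * g1 = g3 * g1 * g3. Proof. by case: rels. Qed.
Lemma br23 : g2 * g3 * g2 = g3 * g2 * g3. Proof. by case: rels. Qed.
Lemma V12 : Vrel g1 g2 = 0. Proof. by case: rels => _ _ _ _ []. Qed.
Lemma V13 : Vrel g1 g3 = 0. Proof. by case: rels => _ _ _ _ []. Qed.
Lemma V23 : Vrel g2 g3 = 0. Proof. by case: rels => _ _ _ _ []. Qed.

Definition e1 := locked (g1 + 1).
Definition e2 := locked (g2 + 1).
Definition e3 := locked (g3 + 1).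
Lemma e1E : e1 = g1 + 1. Proof. by rewrite /e1; unlock. Qed.
Lemma e2E : e2 = g2 + 1. Proof. by rewrite /e2; unlock. Qed.
Lemma e3E : e3 = g3 + 1. Proof. by rewrite /e3; unlock. Qed.

Lemma e11 : e1 * e1 = (q + 1) *: e1. Proof. rewrite e1E; exact: TLsq sq1. Qed.
Lemma e22 : e2 * e2 = (q + 1) *: e2. Proof. rewrite e2E; exact: TLsq sq2. Qed.
Lemma e33 : e3 * e3 = (q + 1) *: e3. Proof. rewrite e3E; exact: TLsq sq3. Qed.
Lemma e121 : e1 * e2 * e1 = q *: e1. Proof. rewrite e1E e2E; exact: TLtri sq1 V12. Qed.
Lemma e131 : e1 * e3 * e1 = q *: e1. Proof. rewrite e1E e3E; exact: TLtri sq1 V13. Qed.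
Lemma e232 : e2 * e3 * e2 = q *: e2. Proof. rewrite e2E e3E; exact: TLtri sq2 V23. Qed.
Lemma e212 : e2 * e1 * e2 = q *: e2. Proof. rewrite e2E e1E; exact: TLtri sq2 (Vsym br12 V12). Qed.
Lemma e313 : e3 * e1 * e3 = q *: e3. Proof. rewrite e3E e1E; exact: TLtri sq3 (Vsym br13 V13). Qed.
Lemma e323 : e3 * e2 * e3 = q *: e3. Proof. rewrite e3E e2E; exact: TLtri sq3 (Vsym br23 V23). Qed.

Lemma lsq (x : A) d : x * x = d *: x -> forall Z, Z * x * x = d *: (Z * x).
Proof. by move=> h Z; rewrite -mulrA h scalerAr. Qed.
Lemma ltri (x y : A) d : x * y * x = d *: x -> forall Z, Z * x * y * x = d *: (Z * x).
Proof. by move=> h Z; rewrite -!mulrA (mulrA x) h scalerAr. Qed.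

Definition L11 := lsq e11. Definition L22 := lsq e22. Definition L33 := lsq e33.
Definition L121 := ltri e121. Definition L131 := ltri e131. Definition L232 := ltri e232.
Definition L212 := ltri e212. Definition L313 := ltri e313. Definition L323 := ltri e323.

Lemma g1E : g1 = e1 - 1. Proof. by rewrite e1E addrK. Qed.
Lemma g2E : g2 = e2 - 1. Proof. by rewrite e2E addrK. Qed.
Lemma g3E : g3 = e3 - 1. Proof. by rewrite e3E addrK. Qed.

Lemma ginvE : ginv q g2 = q^-1 *: e2 - 1.
Proof. rewrite /ginv e2E; lin [:: g2; (1:A)]; ring: hqK. Qed.

Lemma g2ginv : g2 * ginv q g2 = 1.
Proof.
rewrite ginvE g2E mulrBl mulrBr -scalerAr e22 mul1r mulr1 scalerA.
lin [:: e2; (1:A)]; ring: hqK.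
Qed.
Lemma ginvg2 : ginv q g2 * g2 = 1.
Proof.
rewrite ginvE g2E mulrBl mulrBr -scalerAl e22 mul1r mulr1 scalerA.
lin [:: e2; (1:A)]; ring: hqK.
Qed.

Definition u := g2 * g3 * ginv q g2.
Definition eu := locked (u + 1).
Lemma eu0 : eu = u + 1. Proof. by rewrite /eu; unlock. Qed.

Lemma euE : eu = e2 - e2 * e3 - q^-1 *: (e3 * e2) + e3.
Proof.
rewrite eu0 /u ginvE g2E g3E.
rewrite !(mulrDl, mulrDr, mulrBl, mulrBr, mul1r, mulr1, mulNr, mulrN).
rewrite -!scalerAr e232 e22 !scalerA.
lin [:: e2 * e3; e3 * e2; e2; e3; (1:A)]; ring: hqK.
Qed.

Lemma e2eu : e2 * eu = q *: e2 - q *: (e2 * e3).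
Proof.
rewrite euE !(mulrDr, mulrBr, mulrN) -!scalerAr !mulrA e22 e232 !scalerA.
rewrite -!scalerAl ?scalerA.
lin [:: e2 * e3; e2; (1:A)]; ring: hqK.
Qed.

Lemma eue2 : eu * e2 = e2 - q^-1 *: (e3 * e2).
Proof.
rewrite euE !(mulrDl, mulrBl, mulNr) -!scalerAl e22 e232 (L22 e3) !scalerA.
lin [:: e3 * e2; e2; (1:A)]; ring: hqK.
Qed.

Lemma e3F : e3 = eu + e2 - q^-1 *: (e2 * eu) - eu * e2.
Proof.
rewrite e2eu eue2 {1}euE.
lin [:: e2 * e3; e3 * e2; e2; e3; (1:A)]; ring: hqK.
Qed.

Fixpoint Yp (n : nat) : A := if n is n'.+1 then Yp n' * e1 * e3 * e2 else e2.
Fixpoint Ym (n : nat) : A := if n is n'.+1 then q^-1 ^+ 3 *: (Ym n' * e3 * e1 * e2) else e2.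
Definition Yh (j : int) : A := match j with Posz n => Yp n | Negz n => Ym n.+1 end.

Lemma Yp_e2 n : Yp n * e2 = (q + 1) *: Yp n.
Proof. case: n => [|n] /=; [exact: e22 | exact: L22]. Qed.
Lemma Yp_e12 n : Yp n * e1 * e2 = q *: Yp n.
Proof. case: n => [|n] /=; [exact: e212 | exact: L212]. Qed.
Lemma Yp_e32 n : Yp n * e3 * e2 = q *: Yp n.
Proof. case: n => [|n] /=; [exact: e232 | exact: L232]. Qed.
Lemma Ym_e2 n : Ym n * e2 = (q + 1) *: Ym n.
Proof. case: n => [|n] /=; [exact: e22 | by rewrite -scalerAl L22 scalerA mulrC -scalerA]. Qed.
Lemma Ym_e12 n : Ym n * e1 * e2 = q *: Ym n.
Proof. case: n => [|n] /=; [exact: e212 | by rewrite -!scalerAl L212 scalerA mulrC -scalerA]. Qed.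
Lemma Ym_e32 n : Ym n * e3 * e2 = q *: Ym n.
Proof. case: n => [|n] /=; [exact: e232 | by rewrite -!scalerAl L232 scalerA mulrC -scalerA]. Qed.

Lemma R1p n : Yp n.+1 * e3 * e1 = (q * q) *: (Yp n * e1).
Proof. by rewrite /= L323 -scalerAl L131 scalerA. Qed.
Lemma R1m n : Ym n * e3 * e1 = (q * q) *: (Ym n.+1 * e1).
Proof.
rewrite /= -scalerAl L121 scalerA scalerA.
by rewrite (_ : q * q * q^-1 ^+ 3 * q = 1) ?scale1r //; ring: hqk.
Qed.
Lemma R2p n : Yp n * e1 * e3 = q^-1 *: (Yp n.+1 * e3).
Proof. by rewrite /= L323 scalerA hqk scale1r. Qed.
Lemma R2m n : Ym n.+1 * e1 * e3 = q^-1 *: (Ym n * e3).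
Proof.
rewrite /= -!scalerAl L121 -scalerAl L313 !scalerA.
by congr (_ *: _); ring: hqk.
Qed.

Lemma Yh_e2 j : Yh j * e2 = (q + 1) *: Yh j.
Proof. case: j => n; [exact: Yp_e2 | exact: (Ym_e2 n.+1)]. Qed.
Lemma Yh_e12 j : Yh j * e1 * e2 = q *: Yh j.
Proof. case: j => n; [exact: Yp_e12 | exact: (Ym_e12 n.+1)]. Qed.
Lemma Yh_e32 j : Yh j * e3 * e2 = q *: Yh j.
Proof. case: j => n; [exact: Yp_e32 | exact: (Ym_e32 n.+1)]. Qed.

Lemma R1 j : Yh j * e3 * e1 = (q * q) *: (Yh (j - 1) * e1).
Proof.
case: j => [[|n]|n].
- rewrite (_ : Posz 0 - 1 = Negz 0); last by lia. exact: (R1m 0).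
- rewrite (_ : Posz n.+1 - 1 = Posz n); last by lia. exact: R1p.
- rewrite (_ : Negz n - 1 = Negz n.+1); last by lia. exact: (R1m n.+1).
Qed.
Lemma R2 j : Yh j * e1 * e3 = q^-1 *: (Yh (j + 1) * e3).
Proof.
case: j => [n|[|n]].
- rewrite (_ : Posz n + 1 = Posz n.+1); last by lia. exact: R2p.
- rewrite (_ : Negz 0 + 1 = Posz 0); last by lia. exact: (R2m 0).
- rewrite (_ : Negz n.+1 + 1 = Negz n); last by lia. exact: (R2m n.+1).
Qed.

Definition rowE j (a b c : K) := locked (a *: Yh j + b *: (Yh j * e1) + c *: (Yh j * e3)).
Lemma rowEE j a b c : rowE j a b c = a *: Yh j + b *: (Yh j * e1) + c *: (Yh j * e3).
Proof. by rewrite /rowE; unlock. Qed.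

Lemma rowE_e1 j a b c : rowE j a b c * e1 =
  rowE j 0 (a + (q + 1) * b) 0 + rowE (j - 1) 0 (q * q * c) 0.
Proof.
rewrite !rowEE !mulrDl -!scalerAl L11 R1 !scalerA.
lin [:: Yh j * e1; Yh (j - 1) * e1; Yh j * e3; Yh (j - 1) * e3; Yh j; Yh (j - 1)]; ring.
Qed.
Lemma rowE_e2 j a b c : rowE j a b c * e2 = (a * (q + 1) + b * q + c * q) *: Yh j.
Proof.
rewrite !rowEE !mulrDl -!scalerAl Yh_e2 Yh_e12 Yh_e32 !scalerA.
lin [:: Yh j]; ring.
Qed.
Lemma rowE_e3 j a b c : rowE j a b c * e3 =
  rowE j 0 0 (a + (q + 1) * c) + rowE (j + 1) 0 0 (q^-1 * b).
Proof.
rewrite !rowEE !mulrDl -!scalerAl L33 R2 !scalerA.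
lin [:: Yh j * e1; Yh (j + 1) * e1; Yh j * e3; Yh (j + 1) * e3; Yh j; Yh (j + 1)]; ring.
Qed.

Definition ev i a0 b0 c0 a1 b1 c1 a2 b2 c2 :=
  rowE (i - 1) a0 b0 c0 + rowE i a1 b1 c1 + rowE (i + 1) a2 b2 c2.

Lemma ev_e1 i a0 b0 c0 a1 b1 c1 a2 b2 c2 : c0 = 0 ->
  ev i a0 b0 c0 a1 b1 c1 a2 b2 c2 * e1 =
  ev i 0 (a0 + (q + 1) * b0 + q * q * c1) 0 0 (a1 + (q + 1) * b1 + q * q * c2) 0
       0 (a2 + (q + 1) * b2) 0.
Proof.
move=> ->; rewrite /ev !mulrDl !rowE_e1 (_ : i + 1 - 1 = i); last by lia.
rewrite !rowEE.
lin [:: Yh (i - 1) * e1; Yh i * e1; Yh (i + 1) * e1; Yh (i - 1 - 1) * e1;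
        Yh (i - 1) * e3; Yh i * e3; Yh (i + 1) * e3; Yh (i - 1 - 1) * e3;
        Yh (i - 1); Yh i; Yh (i + 1); Yh (i - 1 - 1)]; ring.
Qed.

Lemma ev_e2 i a0 b0 c0 a1 b1 c1 a2 b2 c2 :
  ev i a0 b0 c0 a1 b1 c1 a2 b2 c2 * e2 =
  ev i (a0 * (q + 1) + b0 * q + c0 * q) 0 0 (a1 * (q + 1) + b1 * q + c1 * q) 0 0
       (a2 * (q + 1) + b2 * q + c2 * q) 0 0.
Proof.
rewrite /ev !mulrDl !rowE_e2 !rowEE.
lin [:: Yh (i - 1) * e1; Yh i * e1; Yh (i + 1) * e1;
        Yh (i - 1) * e3; Yh i * e3; Yh (i + 1) * e3;
        Yh (i - 1); Yh i; Yh (i + 1)]; ring.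
Qed.

Lemma ev_e3 i a0 b0 c0 a1 b1 c1 a2 b2 c2 : b2 = 0 ->
  ev i a0 b0 c0 a1 b1 c1 a2 b2 c2 * e3 =
  ev i 0 0 (a0 + (q + 1) * c0) 0 0 (a1 + (q + 1) * c1 + q^-1 * b0)
       0 0 (a2 + (q + 1) * c2 + q^-1 * b1).
Proof.
move=> ->; rewrite /ev !mulrDl !rowE_e3 (_ : i - 1 + 1 = i); last by lia.
rewrite !rowEE.
lin [:: Yh (i - 1) * e1; Yh i * e1; Yh (i + 1) * e1; Yh (i + 1 + 1) * e1;
        Yh (i - 1) * e3; Yh i * e3; Yh (i + 1) * e3; Yh (i + 1 + 1) * e3;
        Yh (i - 1); Yh i; Yh (i + 1); Yh (i + 1 + 1)]; ring.
Qed.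

Lemma ev_sub i a0 b0 c0 a1 b1 c1 a2 b2 c2 a0' b0' c0' a1' b1' c1' a2' b2' c2' :
  ev i a0 b0 c0 a1 b1 c1 a2 b2 c2 - ev i a0' b0' c0' a1' b1' c1' a2' b2' c2' =
  ev i (a0 - a0') (b0 - b0') (c0 - c0') (a1 - a1') (b1 - b1') (c1 - c1')
       (a2 - a2') (b2 - b2') (c2 - c2').
Proof.
rewrite /ev !rowEE.
lin [:: Yh (i - 1) * e1; Yh i * e1; Yh (i + 1) * e1;
        Yh (i - 1) * e3; Yh i * e3; Yh (i + 1) * e3;
        Yh (i - 1); Yh i; Yh (i + 1)]; ring.
Qed.

Lemma ev_scale i k a0 b0 c0 a1 b1 c1 a2 b2 c2 :
  k *: ev i a0 b0 c0 a1 b1 c1 a2 b2 c2 =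
  ev i (k * a0) (k * b0) (k * c0) (k * a1) (k * b1) (k * c1) (k * a2) (k * b2) (k * c2).
Proof.
rewrite /ev !rowEE.
lin [:: Yh (i - 1) * e1; Yh i * e1; Yh (i + 1) * e1;
        Yh (i - 1) * e3; Yh i * e3; Yh (i + 1) * e3;
        Yh (i - 1); Yh i; Yh (i + 1)]; ring.
Qed.

Lemma evG1 i a0 b0 c0 a1 b1 c1 a2 b2 c2 : c0 = 0 ->
  ev i a0 b0 c0 a1 b1 c1 a2 b2 c2 * (e1 - 1) =
  ev i (0 - a0) (a0 + (q + 1) * b0 + q * q * c1 - b0) (0 - c0)
       (0 - a1) (a1 + (q + 1) * b1 + q * q * c2 - b1) (0 - c1)
       (0 - a2) (a2 + (q + 1) * b2 - b2) (0 - c2).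
Proof. by move=> h; rewrite mulrBr mulr1 ev_e1 // ev_sub. Qed.

Lemma evG2 i a0 b0 c0 a1 b1 c1 a2 b2 c2 :
  ev i a0 b0 c0 a1 b1 c1 a2 b2 c2 * (e2 - 1) =
  ev i (a0 * (q + 1) + b0 * q + c0 * q - a0) (0 - b0) (0 - c0)
       (a1 * (q + 1) + b1 * q + c1 * q - a1) (0 - b1) (0 - c1)
       (a2 * (q + 1) + b2 * q + c2 * q - a2) (0 - b2) (0 - c2).
Proof. by rewrite mulrBr mulr1 ev_e2 ev_sub. Qed.

Lemma evG3 i a0 b0 c0 a1 b1 c1 a2 b2 c2 : b2 = 0 ->
  ev i a0 b0 c0 a1 b1 c1 a2 b2 c2 * (e3 - 1) =
  ev i (0 - a0) (0 - b0) (a0 + (q + 1) * c0 - c0)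
       (0 - a1) (0 - b1) (a1 + (q + 1) * c1 + q^-1 * b0 - c1)
       (0 - a2) (0 - b2) (a2 + (q + 1) * c2 + q^-1 * b1 - c2).
Proof. by move=> h; rewrite mulrBr mulr1 ev_e3 // ev_sub. Qed.

Lemma evGi i a0 b0 c0 a1 b1 c1 a2 b2 c2 :
  ev i a0 b0 c0 a1 b1 c1 a2 b2 c2 * (q^-1 *: e2 - 1) =
  ev i (q^-1 * (a0 * (q + 1) + b0 * q + c0 * q) - a0) (q^-1 * 0 - b0) (q^-1 * 0 - c0)
       (q^-1 * (a1 * (q + 1) + b1 * q + c1 * q) - a1) (q^-1 * 0 - b1) (q^-1 * 0 - c1)
       (q^-1 * (a2 * (q + 1) + b2 * q + c2 * q) - a2) (q^-1 * 0 - b2) (q^-1 * 0 - c2).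
Proof. by rewrite mulrBr mulr1 -scalerAr ev_e2 ev_scale ev_sub. Qed.

Definition W i := rowE i 1 0 (-1) + rowE (i - 1) 0 q 0.

Lemma Wev i : W i = ev i 0 q 0 1 0 (-1) 0 0 0.
Proof.
rewrite /W /ev !rowEE.
lin [:: Yh (i - 1) * e1; Yh i * e1; Yh (i + 1) * e1;
        Yh (i - 1) * e3; Yh i * e3; Yh (i + 1) * e3;
        Yh (i - 1); Yh i; Yh (i + 1)]; ring.
Qed.
Lemma Wev1 i : W (i + 1) = ev i 0 0 0 0 q 0 1 0 (-1).
Proof.
rewrite /W /ev !rowEE (_ : i + 1 - 1 = i); last by lia.
lin [:: Yh (i - 1) * e1; Yh i * e1; Yh (i + 1) * e1;
        Yh (i - 1) * e3; Yh i * e3; Yh (i + 1) * e3;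
        Yh (i - 1); Yh i; Yh (i + 1)]; ring.
Qed.

Lemma guE : g1 * u = (e1 - 1) * (e2 - 1) * (e3 - 1) * (q^-1 *: e2 - 1).
Proof. by rewrite /u ginvE g1E g2E g3E !mulrA. Qed.

Lemma C1 i : W i * (g1 * u) = (- q^-1) *: W (i + 1).
Proof.
rewrite guE !mulrA Wev Wev1.
rewrite evG1; last by ring.
rewrite evG2.
rewrite evG3; last by ring.
rewrite evGi ev_scale.
congr (ev _ _ _ _ _ _ _ _ _ _); ring: hqk.
Qed.

Lemma e2ev : e2 = ev 0 0 0 0 1 0 0 0 0 0.
Proof. by rewrite /ev !rowEE !scale0r !addr0 !add0r scale1r. Qed.

Lemma C2 : e2 * (g1 * u) - e2 = (- q^-1) *: W 1.
Proof.
have -> : e2 * (g1 * u) - e2 = ev 0 0 0 0 1 0 0 0 0 0 * (g1 * u) - ev 0 0 0 0 1 0 0 0 0 0.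
  by rewrite -e2ev.
rewrite (_ : (1 : int) = 0 + 1) // Wev1 guE !mulrA.
rewrite evG1; last by ring.
rewrite evG2.
rewrite evG3; last by ring.
rewrite evGi ev_sub ev_scale.
congr (ev _ _ _ _ _ _ _ _ _ _); ring: hqk.
Qed.

Lemma ginvK (x : A) : x ^+ 2 = (q - 1) *: x + q%:A -> x * ginv q x = 1 /\ ginv q x * x = 1.
Proof.
move=> hx; rewrite /ginv; split.
- rewrite -scalerAr mulrBr -expr2 hx mulr_algr.
  lin [:: x; (1:A)]; ring: hqK.
- rewrite -scalerAl mulrBl -expr2 hx mulr_algl.
  lin [:: x; (1:A)]; ring: hqK.
Qed.

Lemma usq : u ^+ 2 = (q - 1) *: u + q%:A.
Proof.
rewrite expr2 /u; have h1 := ginvg2; have h2 := g2ginv.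
move: (ginv q g2) h1 h2 => gi h1 h2.
rewrite -!mulrA (mulrA gi g2) h1 mul1r.
rewrite (mulrA g3 g3) -expr2 sq3 mulrDl mulrDr -!scalerAl -!scalerAr mul1r h2.
by rewrite !mulrA.
Qed.

Definition P := g1 * u.
Definition v := ginv q u * ginv q g1.

Lemma Pv : P * v = 1.
Proof.
have [h1 _] := ginvK sq1; have [h2 _] := ginvK usq.
by rewrite /P /v mulrA -(mulrA g1) h2 mulr1 h1.
Qed.
Lemma vP : v * P = 1.
Proof.
have [_ h1] := ginvK sq1; have [_ h2] := ginvK usq.
by rewrite /P /v mulrA -(mulrA _ _ g1) h1 mulr1 h2.
Qed.

Local Notation Bm := (in_subalg2 g1 u).

Lemma Bm_ginv x : Bm x -> Bm (ginv q x).
Proof.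
move=> hx; rewrite /ginv -scaleNr.
by apply: sub_scale; apply: sub_add => //; apply: sub_scale; apply: sub_one.
Qed.
Lemma Bm_P : Bm P. Proof. exact: sub_mul (sub_a _ _) (sub_b _ _). Qed.
Lemma Bm_v : Bm v. Proof. exact: sub_mul (Bm_ginv (sub_b _ _)) (Bm_ginv (sub_a _ _)). Qed.
Lemma Bm_eu : Bm eu. Proof. rewrite eu0; exact: sub_add (sub_b _ _) (sub_one _ _). Qed.
Lemma Bm_X x n : Bm x -> Bm (x ^+ n).
Proof. by move=> hx; elim: n => [|n IH]; [apply: sub_one | rewrite exprS; apply: sub_mul]. Qed.

Lemma Up n : e2 * P ^+ n.+1 - e2 * P ^+ n = ((- q^-1) ^+ n.+1) *: W (Posz n.+1).
Proof.
elim: n => [|n IH]; first by rewrite expr1 expr0 mulr1 C2.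
have -> : e2 * P ^+ n.+2 - e2 * P ^+ n.+1 = (e2 * P ^+ n.+1 - e2 * P ^+ n) * P.
  by rewrite mulrBl -!mulrA -!exprSr.
rewrite IH -scalerAl C1 scalerA -exprSr.
by rewrite (_ : Posz n.+1 + 1 = Posz n.+2) //; lia.
Qed.

Lemma W0E : W 0 = e2 - e2 * v.
Proof.
have h : (e2 - W 0) * P = e2.
  rewrite mulrBl /P C1 add0r -C2.
  lin [:: e2 * (g1 * u); e2]; ring.
have : (e2 - W 0) * P * v = e2 * v by rewrite h.
rewrite -mulrA Pv mulr1 => h'; rewrite -h'; lin [:: W 0; e2]; ring.
Qed.

Lemma Down n : e2 * v ^+ n - e2 * v ^+ n.+1 = ((- q) ^+ n) *: W (- (Posz n)).
Proof.
elim: n => [|n IH]; first by rewrite expr0 expr1 mulr1 scale1r W0E.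
have -> : e2 * v ^+ n.+1 - e2 * v ^+ n.+2 = (e2 * v ^+ n - e2 * v ^+ n.+1) * v.
  by rewrite mulrBl -!mulrA -!exprSr.
rewrite IH -scalerAl.
have hc := C1 (- Posz n.+1).
rewrite (_ : - Posz n.+1 + 1 = - Posz n) in hc; last by lia.
have : W (- Posz n.+1) * P * v = (- q^-1) *: W (- Posz n) * v by rewrite hc.
rewrite -mulrA Pv mulr1 -scalerAl => hw.
have -> : W (- Posz n) * v = (- q) *: W (- Posz n.+1).
  rewrite hw scalerA (_ : - q * - q^-1 = 1) ?scale1r //; ring: hqk.
by rewrite scalerA -exprSr.
Qed.

Lemma WE2 j : W j * e2 = Yh j + (q * q) *: Yh (j - 1).
Proof.
rewrite Wev ev_e2 /ev !rowEE.
lin [:: Yh (j - 1) * e1; Yh j * e1; Yh (j + 1) * e1;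
        Yh (j - 1) * e3; Yh j * e3; Yh (j + 1) * e3;
        Yh (j - 1); Yh j; Yh (j + 1)]; ring.
Qed.

Lemma tau0 : tau 0 = 0.
Proof.
case: tau_tr => hl _; have := hl (-1) 0 0.
by rewrite scaler0 addr0 mulN1r addNr.
Qed.
Lemma tauD x y : tau (x + y) = tau x + tau y.
Proof. by case: tau_tr => hl _; rewrite -[x in LHS]scale1r hl mul1r. Qed.
Lemma tauZ c x : tau (c *: x) = c * tau x.
Proof. by case: tau_tr => hl _; rewrite -[c *: x]addr0 hl tau0 addr0. Qed.
Lemma tauN x : tau (- x) = - tau x.
Proof. by rewrite -scaleN1r tauZ mulN1r. Qed.
Lemma tauB x y : tau (x - y) = tau x - tau y.
Proof. by rewrite tauD tauN. Qed.
Lemma tauC x y : tau (x * y) = tau (y * x).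
Proof. by case: tau_tr. Qed.

Definition Mk (z : K) := exists Ms : seq A,
  (forall m, m \in Ms -> markov g1 u g2 m) /\ z = tau (\sum_(m <- Ms) m).

Lemma Mk0 : Mk 0.
Proof. by exists [::]; split => //; rewrite big_nil tau0. Qed.
Lemma MkD z1 z2 : Mk z1 -> Mk z2 -> Mk (z1 + z2).
Proof.
move=> [l1 [h1 ->]] [l2 [h2 ->]]; exists (l1 ++ l2); split.
  by move=> m; rewrite mem_cat => /orP [] ?; [apply: h1 | apply: h2].
by rewrite big_cat tauD.
Qed.
Lemma MkZ c z : Mk z -> Mk (c * z).
Proof.
move=> [l [h ->]]; exists (map (fun m => c *: m) l); split.
  move=> m /mapP [m' hm' ->]; have [x [y [eps [hx [hy ->]]]]] := h m' hm'.
  exists (c *: x), y, eps; split; first exact: sub_scale.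
  by split => //; rewrite !scalerAl.
by rewrite big_map -scaler_sumr tauZ.
Qed.
Lemma MkB z1 z2 : Mk z1 -> Mk z2 -> Mk (z1 - z2).
Proof. by move=> h1 h2; apply: MkD => //; rewrite -mulN1r; apply: MkZ. Qed.
Lemma MkE z1 z2 : z1 = z2 -> Mk z2 -> Mk z1.
Proof. by move=> ->. Qed.

Lemma MkM x y (eps : bool) : Bm x -> Bm y -> Mk (tau (x * g2 ^+ eps * y)).
Proof.
move=> hx hy; exists [:: x * g2 ^+ eps * y]; split; last by rewrite big_seq1.
by move=> m; rewrite inE => /eqP ->; exists x, y, eps.
Qed.
Lemma MkB1 b : Bm b -> Mk (tau b).
Proof. by move=> hb; apply: MkE (MkM false (sub_one _ _) hb); rewrite expr0 mulr1 mul1r. Qed.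
Lemma Mkg2 x y : Bm x -> Bm y -> Mk (tau (x * g2 * y)).
Proof. by move=> hx hy; apply: MkE (MkM true hx hy); rewrite expr1. Qed.
Lemma Mke2 x y : Bm x -> Bm y -> Mk (tau (x * e2 * y)).
Proof.
move=> hx hy; apply: (MkE (z2 := tau (x * g2 * y) + tau (x * y))).
  by rewrite e2E mulrDr mulr1 mulrDl tauD.
by apply: MkD; [apply: Mkg2 | apply: MkB1; apply: sub_mul].
Qed.
Lemma Mke2l y : Bm y -> Mk (tau (e2 * y)).
Proof. by move=> hy; apply: MkE (Mke2 (sub_one _ _) hy); rewrite mul1r. Qed.
Lemma Mke2e2 b : Bm b -> Mk (tau (e2 * b * e2)).
Proof.
move=> hb; apply: (MkE (z2 := (q + 1) * tau (e2 * b))); last by apply: MkZ; apply: Mke2l.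
by rewrite tauC mulrA e22 -scalerAl tauZ.
Qed.

Lemma MkYh j : Mk (tau (Yh j)).
Proof.
have hP n : Mk (tau (e2 * P ^+ n * e2)) by apply: Mke2e2; apply: Bm_X; apply: Bm_P.
have hv n : Mk (tau (e2 * v ^+ n * e2)) by apply: Mke2e2; apply: Bm_X; apply: Bm_v.
case: j => n.
- elim: n => [|n IH]; first by apply: MkE (Mke2l (sub_one _ _)); rewrite mulr1.
  have e := congr1 (fun x => tau (x * e2)) (Up n); move: e => /=.
  rewrite mulrBl tauB -scalerAl tauZ WE2 tauD tauZ.
  rewrite (_ : Posz n.+1 - 1 = Posz n); last by lia.
  move=> e.
  have -> : tau (Yh (Posz n.+1)) =
     (- q) ^+ n.+1 * (tau (e2 * P ^+ n.+1 * e2) - tau (e2 * P ^+ n * e2)) - q * q * tau (Yh (Posz n)).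
    rewrite e mulrA (_ : (- q) ^+ n.+1 * (- q^-1) ^+ n.+1 = 1); first by ring.
    by rewrite -exprMn mulrNN mulrV // expr1n.
  by apply: MkB; apply: MkZ => //; apply: MkB.
- have : forall m, Mk (tau (Yh (- Posz m))).
    elim=> [|m IH]; first by apply: MkE (Mke2l (sub_one _ _)); rewrite mulr1.
    have e := congr1 (fun x => tau (x * e2)) (Down m); move: e => /=.
    rewrite mulrBl tauB -scalerAl tauZ WE2 tauD tauZ.
    rewrite (_ : - Posz m - 1 = - Posz m.+1); last by lia.
    move=> e.
    have -> : tau (Yh (- Posz m.+1)) =
       q^-1 * q^-1 * ((- q^-1) ^+ m * (tau (e2 * v ^+ m * e2) - tau (e2 * v ^+ m.+1 * e2)) - tau (Yh (- Posz m))).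
      rewrite e mulrA (_ : (- q^-1) ^+ m * (- q) ^+ m = 1); last first.
        by rewrite -exprMn mulrNN mulVr // expr1n.
      by ring: hqk.
    by apply: MkZ; apply: MkB => //; apply: MkZ; apply: MkB.
  by move=> /(_ n.+1); rewrite (_ : - Posz n.+1 = Negz n) //; lia.
Qed.

Inductive Row : A -> Prop :=
  | RowR j a b c : Row (rowE j a b c)
  | Row0 : Row 0
  | RowD x y : Row x -> Row y -> Row (x + y)
  | RowZ k x : Row x -> Row (k *: x).

Lemma YhR j : Yh j = rowE j 1 0 0.
Proof. by rewrite rowEE !scale0r !addr0 scale1r. Qed.

Lemma Row_e1 x : Row x -> Row (x * e1).
Proof.
elim=> [j a b c|||k y _ IH]; first by rewrite rowE_e1; apply: RowD; apply: RowR.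
- by rewrite mul0r; apply: Row0.
- by move=> y z _ IH1 _ IH2; rewrite mulrDl; apply: RowD.
- by rewrite -scalerAl; apply: RowZ.
Qed.
Lemma Row_e2 x : Row x -> Row (x * e2).
Proof.
elim=> [j a b c|||k y _ IH]; first by rewrite rowE_e2 YhR; apply: RowZ; apply: RowR.
- by rewrite mul0r; apply: Row0.
- by move=> y z _ IH1 _ IH2; rewrite mulrDl; apply: RowD.
- by rewrite -scalerAl; apply: RowZ.
Qed.
Lemma Row_e3 x : Row x -> Row (x * e3).
Proof.
elim=> [j a b c|||k y _ IH]; first by rewrite rowE_e3; apply: RowD; apply: RowR.
- by rewrite mul0r; apply: Row0.
- by move=> y z _ IH1 _ IH2; rewrite mulrDl; apply: RowD.
- by rewrite -scalerAl; apply: RowZ.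
Qed.
Lemma Row_sub x y : Row x -> Row y -> Row (x - y).
Proof. by move=> hx hy; apply: RowD => //; rewrite -scaleN1r; apply: RowZ. Qed.

Inductive Gen : A -> Prop :=
  | Gen1 : Gen 1
  | Geng1 : Gen g1
  | Geng2 : Gen g2
  | Geng3 : Gen g3
  | GenD x y : Gen x -> Gen y -> Gen (x + y)
  | GenZ k x : Gen x -> Gen (k *: x)
  | GenM x y : Gen x -> Gen y -> Gen (x * y).

Lemma RowGen y : Gen y -> forall x, Row x -> Row (x * y).
Proof.
elim=> [||||y1 y2 _ IH1 _ IH2|k y' _ IH|y1 y2 _ IH1 _ IH2] x hx.
- by rewrite mulr1.
- by rewrite g1E mulrBr mulr1; apply: Row_sub => //; apply: Row_e1.
- by rewrite g2E mulrBr mulr1; apply: Row_sub => //; apply: Row_e2.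
- by rewrite g3E mulrBr mulr1; apply: Row_sub => //; apply: Row_e3.
- by rewrite mulrDr; apply: RowD; [apply: IH1 | apply: IH2].
- by rewrite -scalerAr; apply: RowZ; apply: IH.
- by rewrite mulrA; apply: IH2; apply: IH1.
Qed.

Lemma RowMk x : Row x -> Mk (tau (x * e2)).
Proof.
elim=> [j a b c|||k y _ IH].
- by rewrite rowE_e2 tauZ; apply: MkZ; apply: MkYh.
- by rewrite mul0r tau0; apply: Mk0.
- by move=> y z _ IH1 _ IH2; rewrite mulrDl tauD; apply: MkD.
- by rewrite -scalerAl tauZ; apply: MkZ.
Qed.

Lemma corner a : Gen a -> Mk (tau (e2 * a * e2)).
Proof.
move=> ha; apply: RowMk; apply: RowGen => //.
by rewrite (_ : e2 = Yh 0) // YhR; apply: RowR.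
Qed.

Lemma Gen_ginv2 : Gen (ginv q g2).
Proof.
rewrite /ginv -scaleNr.
by apply: GenZ; apply: GenD; [apply: Geng2 | apply: GenZ; apply: Gen1].
Qed.
Lemma BmGen x : Bm x -> Gen x.
Proof.
elim=> [|||y z _ IH1 _ IH2|k y _ IH|y z _ IH1 _ IH2].
- exact: Gen1.
- exact: Geng1.
- by apply: GenM; [apply: GenM; [apply: Geng2 | apply: Geng3] | apply: Gen_ginv2].
- by apply: GenD.
- by apply: GenZ.
- by apply: GenM.
Qed.
Lemma Gen_e2 : Gen e2. Proof. by rewrite e2E; apply: GenD; [apply: Geng2 | apply: Gen1]. Qed.

Lemma Mk2 w w' : Bm w -> Bm w' -> Mk (tau (e2 * w * e2 * w')).
Proof.
move=> hw hw'.
have hq1 : (q + 1)^-1 * (q + 1) = 1 by rewrite mulVr.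
apply: (MkE (z2 := (q + 1)^-1 * tau (e2 * (w * e2 * w') * e2))).
  by rewrite [in RHS]tauC !mulrA e22 -!scalerAl tauZ mulrA hq1 mul1r.
apply: MkZ; apply: corner.
by apply: GenM; [apply: GenM; [apply: BmGen | apply: Gen_e2] | apply: BmGen].
Qed.

Lemma g3u : g3 * u = g2 * g3.
Proof. by rewrite /u !mulrA -br23 -(mulrA _ g2) g2ginv mulr1. Qed.
Lemma ug2 : u * g2 = g2 * g3.
Proof. by rewrite /u -mulrA ginvg2 mulr1. Qed.

Lemma Mke3 X : Bm X -> Mk (tau (e3 * X)).
Proof.
move=> hX; rewrite e3F !mulrBl mulrDl !tauB tauD -scalerAl tauZ.
apply: MkB; first apply: MkB; first apply: MkD.
- by apply: MkB1; apply: sub_mul => //; apply: Bm_eu.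
- exact: Mke2l.
- by apply: MkZ; rewrite -mulrA; apply: Mke2l; apply: sub_mul => //; apply: Bm_eu.
- by apply: Mke2 => //; apply: Bm_eu.
Qed.

Lemma Mke3e2 b b' : Bm b -> Bm b' -> Mk (tau (e3 * b * e2 * b')).
Proof.
move=> hb hb'; rewrite e3F !(mulrBl, mulrDl) !tauB tauD -!scalerAl tauZ.
apply: MkB; first apply: MkB; first apply: MkD.
- by apply: Mke2 => //; apply: sub_mul => //; apply: Bm_eu.
- exact: Mk2.
- apply: MkZ; rewrite -(mulrA e2 eu b); apply: Mk2 => //; apply: sub_mul => //; apply: Bm_eu.
- rewrite -!mulrA tauC !mulrA -(mulrA _ b' eu).
  by apply: Mk2 => //; apply: sub_mul => //; apply: Bm_eu.
Qed.

Lemma MkMain s r : Mk (tau (g3 * u * P ^+ s * g3 * P ^+ r)).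
Proof.
have hb : Bm (P ^+ r * u) by apply: sub_mul; [apply: Bm_X; apply: Bm_P | apply: sub_b].
have hb' : Bm (P ^+ s) by apply: Bm_X; apply: Bm_P.
move: hb hb'; set b := P ^+ r * u; set b' := P ^+ s => hb hb'.
have -> : tau (g3 * u * P ^+ s * g3 * P ^+ r) = tau (g3 * b * g2 * b').
  by rewrite g3u -(mulrA _ g3 (P ^+ r)) tauC -ug2 /b !mulrA.
clearbody b b'.
have -> : g3 * b * g2 * b' = e3 * b * e2 * b' - e3 * (b * b') - b * e2 * b' + b * b'.
  rewrite g3E g2E !(mulrBl, mulrBr, mul1r, mulr1, mulrA).
  lin [:: e3 * b * e2 * b'; e3 * b * b'; b * e2 * b'; b * b']; ring.
rewrite tauD !tauB.
apply: MkD; first apply: MkB; first apply: MkB.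
- exact: Mke3e2.
- by apply: Mke3; apply: sub_mul.
- exact: Mke2.
- by apply: MkB1; apply: sub_mul.
Qed.

End Main.

Unset Implicit Arguments.

Theorem lemma4p8 (K : idomainType) (q : K)
  (charK0 : [pchar K] =i pred0)
  (q_unit : q \is a GRing.unit) (q_sq : exists t : K, q = t ^+ 2)
  (q1_unit : (q + 1) \is a GRing.unit)
  (A : algType K) (g1 g2 g3 : A)
  (rels : TL3_rels q g1 g2 g3)
  (tau : A -> K) (tau_tr : is_trace tau)
  (r s : nat) (r_pos : (0 < r)%N) (r_le_s : (r <= s)%N) :
  let X := g2 * g1 * g3 in
  let u := g2 * g3 * ginv q g2 in
  exists (h : nat) (c : nat -> A) (Ms : seq A),
    (h <= s)%N /\
    (forall j, (j <= h)%N -> in_subalg2 g1 u (c j)) /\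
    (forall m, m \in Ms -> markov g1 u g2 m) /\
    tau (g3 * u * (g1 * u) ^+ s * g3 * (g1 * u) ^+ r)
    = tau (\sum_(0 <= j < h.+1) c j * X ^+ j + \sum_(m <- Ms) m).
Proof.
move=> X u'.
have [Ms [hM he]] := MkMain q_unit rels q1_unit tau_tr s r.
exists 0%N, (fun _ => 0), Ms; split => //; split.
  move=> j _; rewrite -(scale0r 1); apply: sub_scale; apply: sub_one.
split; first exact: hM.
by rewrite big_nat1 mul0r add0r -he.
Qed.
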